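(* Let $F$ be a fixed graph that is not a forest and let $k$ be a fixed positive integer. Then, as $n\to\infty$, \[\mathrm{ex}(n,M_k,F)=(1+o(1))\frac{\mathrm{ex}(n,F)^k}{k!}.\]
   Context: $M_k$ is the matching with $k$ edges. $\mathrm{ex}(n,F)$ is the maximum number of edges in an $F$-free graph on $n$ vertices. For graphs $H,G$, $\mathcal{N}(H,G)$ is the number of subgraphs of $G$ isomorphic to $H$, and $\mathrm{ex}(n,H,F)$ is the maximum of $\mathcal{N}(H,G)$ over $F$-free graphs $G$ on $n$ vertices. *)

(* Defs.v *)
From mathcomp Require Import all_boot all_order all_algebra.
Set Implicit Arguments. Unset Strict Implicit. Unset Printing Implicit Defensive.

(* A (simple) graph on vertex set 'I_n is given by its edge set: a set of
   2-element subsets of 'I_n. *)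
Definition is_graph n (E : {set {set 'I_n}}) : bool :=
  [forall e in E, #|e| == 2].

Definition contains m (F : {set {set 'I_m}}) n (G : {set {set 'I_n}}) : bool :=
  [exists f : {ffun 'I_m -> 'I_n},
     injectiveb f && [forall e in F, (f @: e) \in G]].

Definition Ffree m (F : {set {set 'I_m}}) n (G : {set {set 'I_n}}) : bool :=
  ~~ contains F G.

Definition has_cycle m (F : {set {set 'I_m}}) : Prop :=
  exists l : nat, 3 <= l /\
    exists f : 'I_l -> 'I_m, injective f /\
      forall i : 'I_l, [set f i; f (ordS i)] \in F.

Definition is_forest m (F : {set {set 'I_m}}) : Prop := ~ has_cycle F.

(* N(M_k, G): number of subgraphs of G isomorphic to the matching M_k,
   i.e. number of sets of k pairwise disjoint edges of G. *)
Definition num_matchings n (k : nat) (G : {set {set 'I_n}}) : nat :=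
  #|[set S : {set {set 'I_n}} | [&& S \subset G, #|S| == k &
      [forall e1 in S, forall e2 in S, (e1 != e2) ==> [disjoint e1 & e2]]]]|.

Definition ex n m (F : {set {set 'I_m}}) : nat :=
  \max_(G : {set {set 'I_n}} | is_graph G && Ffree F G) #|G|.

Definition ex_matching n k m (F : {set {set 'I_m}}) : nat :=
  \max_(G : {set {set 'I_n}} | is_graph G && Ffree F G) num_matchings k G.

(* Main.v *)
Require Import Defs.
From mathcomp Require Import all_boot all_order all_algebra.
From mathcomp Require Import zify ring lra.

Lemma card_bigcup_le (I T : finType) (P : pred I) (f : I -> {set T}) :
  #|\bigcup_(i | P i) f i| <= \sum_(i | P i) #|f i|.
Proof.
apply: (big_ind2 (fun (x : {set T}) y => #|x| <= y)).
- by rewrite cards0.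
- move=> x1 x2 y1 y2 h1 h2; rewrite (leq_trans (leq_card_setU _ _)) //.
  exact: leq_add.
- by move=> i _.
Qed.

Lemma nm_upper n k (G : {set {set 'I_n}}) : num_matchings k G <= 'C(#|G|, k).
Proof.
rewrite /num_matchings -cards_draws; apply: subset_leq_card.
apply/subsetP=> S; rewrite !inE => /and3P[-> -> _] //.
Qed.

Lemma nbr_card n (G : {set {set 'I_n}}) (e1 : {set 'I_n}) :
  #|e1| = 2 -> is_graph G -> #|[set e2 in G | ~~ [disjoint e1 & e2]]| <= 2 * n.
Proof.
move=> h1 hG.
have sub : [set e2 in G | ~~ [disjoint e1 & e2]] \subset
   [set [set p.1; p.2] | p in setX e1 [set: 'I_n]].
  apply/subsetP=> e2; rewrite inE => /andP[e2G].
  rewrite -setI_eq0 => /set0Pn[x]; rewrite inE => /andP[xe1 xe2].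
  have /cards2P[a [b [ab def]]] : #|e2| == 2 by move/forallP: hG => /(_ e2) /implyP; apply.
  move: xe2; rewrite def !inE => /orP[] /eqP xa.
  - by apply/imsetP; exists (x, b); rewrite ?inE ?xe1 //= xa.
  - by apply/imsetP; exists (x, a); rewrite ?inE ?xe1 //= xa setUC.
rewrite (leq_trans (subset_leq_card sub)) // (leq_trans (leq_imset_card _ _)) //.
by rewrite cardsX h1 cardsT card_ord.
Qed.


Lemma nm_lower n j (G : {set {set 'I_n}}) : is_graph G ->
  'C(#|G|, j.+1) <= num_matchings j.+1 G + 'C(#|G|, j) * (j * (2 * n)).
Proof.
move=> hG.
set A := [set S : {set {set 'I_n}} | S \subset G & #|S| == j.+1].
set Mt := [set S : {set {set 'I_n}} | [&& S \subset G, #|S| == j.+1 &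
      [forall e1 in S, forall e2 in S, (e1 != e2) ==> [disjoint e1 & e2]]]].
set Ts := [set T : {set {set 'I_n}} | T \subset G & #|T| == j].
pose N (T : {set {set 'I_n}}) := [set e in G | [exists e1 in T, ~~ [disjoint e1 & e]]].
have hA : #|A| = 'C(#|G|, j.+1) by rewrite cards_draws.
have hT : #|Ts| = 'C(#|G|, j) by rewrite cards_draws.
rewrite -hA -hT -(cardsID Mt A) /num_matchings -/Mt.
apply: leq_add; first by apply: subset_leq_card; apply: subsetIr.
have sub : A :\: Mt \subset \bigcup_(T in Ts) [set e2 |: T | e2 in N T].
  apply/subsetP=> S; rewrite !inE => /andP[hM /andP[SG /eqP cS]].
  move: hM; rewrite SG cS eqxx /= => /forallPn[e1]; rewrite negb_imply => /andP[e1S].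
  move/forallPn=> [e2]; rewrite negb_imply => /andP[e2S]; rewrite negb_imply => /andP[ne de].
  apply/bigcupP; exists (S :\ e2).
    rewrite inE; apply/andP; split.
      by apply: subset_trans SG; apply: subsetDl.
    by move: cS; rewrite (cardsD1 e2) e2S add1n => -[->].
  apply/imsetP; exists e2; last by rewrite setD1K.
  rewrite inE (subsetP SG _ e2S) /=; apply/existsP; exists e1.
  by rewrite !inE e1S ne de.
rewrite (leq_trans (subset_leq_card sub)) // (leq_trans (card_bigcup_le _ _ _ _)) //.
rewrite -sum_nat_const; apply: leq_sum => T; rewrite inE => /andP[TG /eqP cT].
rewrite (leq_trans (leq_imset_card _ _)) //.
have subN : N T \subset \bigcup_(e1 in T) [set e2 in G | ~~ [disjoint e1 & e2]].
  apply/subsetP=> e; rewrite inE => /andP[eG /existsP[e1 /andP[e1T de]]].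
  by apply/bigcupP; exists e1; rewrite // inE eG.
rewrite (leq_trans (subset_leq_card subN)) // (leq_trans (card_bigcup_le _ _ _ _)) //.
rewrite -cT -sum_nat_const; apply: leq_sum => e1 e1T; apply: nbr_card => //.
by apply/eqP; move/forallP: hG => /(_ e1) /implyP; apply; apply: (subsetP TG).
Qed.


Lemma ffact_le_exp E k : E ^_ k <= E ^ k.
Proof.
elim: k => [|k IH]; first by [].
rewrite ffactnSr expnSr; apply: leq_mul => //; exact: leq_subr.
Qed.

Lemma exp_le_ffact E k : E ^ k <= E ^_ k + k * k * E ^ k.-1.
Proof.
elim: k => [|k IH]; first by [].
rewrite ffactnSr expnSr /=.
have h1 := ffact_le_exp E k.
case: k IH h1 => [|k] IH h1.
  rewrite /= !expn0 ffactn0; lia.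
rewrite /= in IH *.
rewrite expnSr.
have: E ^ k.+1 * E <= (E ^_ k.+1 + k.+1 * k.+1 * E ^ k) * E by rewrite leq_mul2r IH orbT.
set a := E ^ k. set b := E ^_ k.+1. move: h1; rewrite expnSr -/a -/b => h1.
case: (leqP k.+1 E) => hE.
  have -> : E = (E - k.+1) + k.+1 by lia.
  set c := E - k.+1. 
  rewrite addnK. nia.
have b0 : b = 0 by rewrite /b ffact_small.
rewrite b0 in h1 *. nia.
Qed.


Lemma nat_bounds n m (F : {set {set 'I_m}}) j :
  0 < n -> 0 < ex n F ->
  j.+1`! * ex_matching n j.+1 F <= ex n F ^ j.+1 /\
  ex n F ^ j.+1 <= j.+1`! * ex_matching n j.+1 F + 3 * j.+1 * j.+1 * n * ex n F ^ j.
Proof.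
move=> n0 E0.
set E := ex n F; set X := ex_matching n j.+1 F.
have XC : X <= 'C(E, j.+1).
  apply/bigmax_leqP => G /andP[gG fG].
  rewrite (leq_trans (nm_upper _ _ _)) // leq_bin2l //.
  by rewrite /E /ex; apply: leq_bigmax_cond; rewrite gG.
split.
  rewrite (leq_trans _ (ffact_le_exp E j.+1)) // -bin_ffact mulnC leq_mul2r XC orbT //.
have [G GP GE] := @eq_bigmax_cond _ (fun G : {set {set 'I_n}} => is_graph G && Ffree F G)
   (fun G0 => #|G0|) (ltac:(rewrite lt0n; apply/negP => /eqP h; move: E0; rewrite /E /ex;
      rewrite (eq_bigl (mem (fun G : {set {set 'I_n}} => is_graph G && Ffree F G))) // big_pred0 //; exact/card0_eq)).
have {}GE : #|G| = E by rewrite -GE /E /ex; apply: eq_bigl => G0. move: GP; rewrite unfold_in => /andP[gG fG].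
have XG : num_matchings j.+1 G <= X.
  by rewrite /X /ex_matching; apply: leq_bigmax_cond; rewrite gG.
have L := nm_lower _ j _ gG; rewrite GE in L.
have h1 := exp_le_ffact E j.+1; rewrite /= -bin_ffact in h1.
have h2 : j.+1`! * 'C(E, j) <= j.+1 * E ^ j.
  by rewrite factS -mulnA leq_mul2l [_`! * _]mulnC bin_ffact ffact_le_exp orbT.
have h3 : 'C(E, j.+1) * j.+1`! <= (X + 'C(E, j) * (j * (2 * n))) * j.+1`!.
  by rewrite leq_mul2r (leq_trans L) ?orbT // leq_add2r.
set c := 'C(E, j) in h2 h3; set f := j.+1`! in h1 h2 h3 *; set b := 'C(E, j.+1) in h1 h3.
set p := E ^ j in h1 h2 *. set q := E ^ j.+1 in h1 *.
have h4 : c * (j * (2 * n)) * f <= j.+1 * p * (j * (2 * n)).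
  by rewrite mulnAC leq_mul2r (mulnC c) h2 orbT.
have h5 : j.+1 * j.+1 * p <= j.+1 * j.+1 * n * p.
  by rewrite leq_mul2r leq_pmulr ?orbT.
have h6 : j.+1 * p * (j * (2 * n)) <= 2 * (j.+1 * j.+1 * n * p).
  have : j <= j.+1 by []. nia.
nia.
Qed.

Set Implicit Arguments. Unset Strict Implicit.



Lemma ordS_neq l (i : 'I_l) : 2 <= l -> ordS i != i.
Proof.
move=> l2; apply/eqP => /(congr1 val) /=.
case: (ltnP i.+1 l) => h.
  by rewrite modn_small //; lia.
have e : i.+1 = l by have := ltn_ord i; lia.
by rewrite e modnn => h0; move: e; rewrite -h0; lia.
Qed.

Lemma ordSS_neq l (i : 'I_l) : 3 <= l -> ordS (ordS i) != i.
Proof.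
move=> l3; apply/eqP => /(congr1 val) /=.
have hi := ltn_ord i.
case: (ltnP i.+1 l) => h.
  rewrite (modn_small h).
  case: (ltnP i.+2 l) => h2.
    by rewrite (modn_small h2); lia.
  have e : i.+2 = l by lia.
  by rewrite e modnn => h0; lia.
have e : i.+1 = l by lia.
rewrite e modnn modn_small; lia.
Qed.

Definition cyc n l (g : {ffun 'I_l -> 'I_n}) : {set {set 'I_n}} :=
  [set [set g i; g (ordS i)] | i : 'I_l].

Lemma set2_eq (T : finType) (a b c d : T) : [set a; b] = [set c; d] ->
  (a = c /\ b = d) \/ (a = d /\ b = c).
Proof.
move=> e.
have ha : a \in [set c; d] by rewrite -e !inE eqxx.
have hb : b \in [set c; d] by rewrite -e !inE eqxx orbT.
have hc : c \in [set a; b] by rewrite e !inE eqxx.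
have hd : d \in [set a; b] by rewrite e !inE eqxx orbT.
move: ha hb hc hd; rewrite !inE => /orP[] /eqP ha /orP[] /eqP hb /orP[] /eqP hc /orP[] /eqP hd;
  subst; auto.
Qed.

Lemma card_cyc n l (g : {ffun 'I_l -> 'I_n}) : 3 <= l -> injective g -> #|cyc g| = l.
Proof.
move=> l3 ig; rewrite /cyc card_imset ?card_ord // => i j /set2_eq [[/ig -> _] // | [h1 h2]].
move/ig: h1 => h1; move/ig: h2 => h2.
by move: (ordSS_neq j l3); rewrite -h1 h2 eqxx.
Qed.

Lemma cyc_edge n l (g : {ffun 'I_l -> 'I_n}) e : 3 <= l -> injective g -> e \in cyc g -> #|e| == 2.
Proof.
move=> l3 ig /imsetP[i _ ->]; rewrite cards2.
have : ordS i != i by apply: ordS_neq; lia.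
move=> h; have -> : g i != g (ordS i) by apply: (contra_neq _ h) => /ig /esym.
by [].
Qed.

Lemma cyc_nonempty n l (g : {ffun 'I_l -> 'I_n}) : 0 < l -> cyc g != set0.
Proof.
move=> l0; apply/set0Pn; exists [set g (Ordinal l0); g (ordS (Ordinal l0))].
by apply/imsetP; exists (Ordinal l0).
Qed.

Lemma nocyc_Ffree m (F : {set {set 'I_m}}) n (G : {set {set 'I_n}}) :
  has_cycle F ->
  (forall l, 3 <= l -> l <= m -> forall g : {ffun 'I_l -> 'I_n}, injective g -> ~~ (cyc g \subset G)) ->
  Ffree F G.
Proof.
move=> [l [l3 [h [ih hF]]]] H; apply/negP => /existsP[f /andP[/injectiveP i_f /forallP fF]].
have lm : l <= m by have := leq_card h ih; rewrite !card_ord.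
pose g := [ffun i => f (h i)].
have ig : injective g by move=> i j; rewrite !ffunE => /i_f /ih.
move: (H l l3 lm g ig) => /negP; apply.
apply/subsetP => e /imsetP[i _ ->].
have := fF [set h i; h (ordS i)]; rewrite hF /= imsetU1 imset_set1 !ffunE; apply.
Qed.



Lemma card_bigcup_seq (I : Type) (T : finType) (r : seq I) (P : pred I) (f : I -> {set T}) :
  #|\bigcup_(i <- r | P i) f i| <= \sum_(i <- r | P i) #|f i|.
Proof.
apply: (big_ind2 (fun (x : {set T}) y => #|x| <= y)).
- by rewrite cards0.
- move=> x1 x2 y1 y2 h1 h2; rewrite (leq_trans (leq_card_setU _ _)) //.
  exact: leq_add.
- by move=> i _.
Qed.

Lemma supersets_card (T : finType) (K C : {set T}) e : C \subset K -> #|C| <= e ->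
  #|[set S : {set T} | [&& S \subset K, #|S| == e & C \subset S]]| <= 'C(#|K| - #|C|, e - #|C|).
Proof.
move=> CK Ce.
rewrite -(cardsDS CK) -cards_draws.
have sub : [set S : {set T} | [&& S \subset K, #|S| == e & C \subset S]] \subset
   (fun X => X :|: C) @: [set X : {set T} | X \subset K :\: C & #|X| == e - #|C|].
  apply/subsetP => S; rewrite inE => /and3P[SK /eqP Se CS].
  apply/imsetP; exists (S :\: C).
    by rewrite inE setSD //= cardsDS // Se.
  apply/setP => x; rewrite !inE; case: (boolP (x \in C)) => xC.
    by rewrite (subsetP CS) ?orbT.
  by rewrite orbF.
by rewrite (leq_trans (subset_leq_card sub)) // leq_imset_card.
Qed.

Lemma bin_ratio M e c : c <= e -> e <= M -> 'C(M - c, e - c) * M ^ c <= 'C(M, e) * e ^ c.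
Proof.
move=> ce eM; elim: c ce => [|c IH] ce; first by rewrite !subn0 !expn0 !muln1.
have IH' := IH (ltnW ce).
have hd := mul_bin_diag (M - c) (e - c.+1).
have e1 : (M - c).-1 = M - c.+1 by lia.
have e2 : (e - c.+1).+1 = e - c by lia.
rewrite e1 e2 in hd.
have Mc : 0 < M - c by lia.
have key : 'C(M - c.+1, e - c.+1) * M <= e * 'C(M - c, e - c).
  have : 'C(M - c.+1, e - c.+1) * M * (M - c) <= e * 'C(M - c, e - c) * (M - c).
    have h3 : (e - c) * M <= e * (M - c) by nia.
    rewrite -mulnA (mulnC M) mulnA [_ * (M - c)]mulnC hd.
    nia.
  by rewrite leq_mul2r; case/orP => // /eqP h; move: Mc; rewrite h.
have k1 := leq_mul key (leqnn (M ^ c)).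
have k2 := leq_mul (leqnn e) IH'.
rewrite expnS.
set A := 'C(M - c.+1, e - c.+1) in k1 *; set B := 'C(M - c, e - c) in k1 k2.
rewrite mulnA; apply: (leq_trans k1); rewrite -mulnA; apply: (leq_trans k2).
by rewrite expnS mulnCA.
Qed.

Lemma two_bin2 n : 2 * 'C(n, 2) = n * n.-1.
Proof.
elim: n => [|n IH] //=.
rewrite binS bin1 mulnDr IH; case: n {IH} => //= n; lia.
Qed.



Definition Kn n : {set {set 'I_n}} := [set x : {set 'I_n} | #|x| == 2].
Definition Un n e : {set {set {set 'I_n}}} := [set S : {set {set 'I_n}} | S \subset Kn n & #|S| == e].
Definition badset n (S : {set {set 'I_n}}) l :=
  [set g : {ffun 'I_l -> 'I_n} | injectiveb g & cyc g \subset S].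

Lemma card_Kn n : #|Kn n| = 'C(n, 2).
Proof. by rewrite /Kn card_draws card_ord. Qed.

Lemma count_l n e l : 3 <= l -> l <= e ->
  \sum_(S in Un n e) #|badset S l| <= n ^ l * 'C('C(n, 2) - l, e - l).
Proof.
move=> l3 le.
under eq_bigr => S _ do rewrite -sum1_card.
rewrite (exchange_big_dep (fun g : {ffun 'I_l -> 'I_n} => injectiveb g)) /=; last first.
  by move=> S g _; rewrite inE => /andP[].
apply: (@leq_trans (\sum_(g : {ffun 'I_l -> 'I_n}) 'C('C(n, 2) - l, e - l))); last first.
  by rewrite sum_nat_const card_ffun !card_ord.
rewrite [X in _ <= X](bigID (fun g : {ffun 'I_l -> 'I_n} => injectiveb g)) /=.
apply: leq_trans (leq_addr _ _); apply: leq_sum => g /injectiveP ig.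
rewrite sum1dep_card.
have cg := card_cyc l3 ig.
have -> : 'C('C(n, 2) - l, e - l) = 'C(#|Kn n| - #|cyc g|, e - #|cyc g|) by rewrite cg card_Kn.
apply: leq_trans (supersets_card (e := e) _ _); last by rewrite cg.
  apply: subset_leq_card; apply/subsetP => S; rewrite !inE => /andP[/andP[SK Se] /andP[_ cS]].
  by rewrite SK Se cS.
apply/subsetP => x xc; rewrite inE; exact: cyc_edge l3 ig xc.
Qed.

Definition bad n m (S : {set {set 'I_n}}) := \sum_(l < m.+1 | 3 <= l) #|badset S l|.

Lemma ratio_bound n d l : 2 <= n -> 3 <= l -> l <= d * n -> d * n <= 'C(n, 2) ->
  n ^ l * 'C('C(n, 2) - l, d * n - l) <= 'C('C(n, 2), d * n) * (4 * d) ^ l.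
Proof.
move=> n2 l3 le eM.
set M := 'C(n, 2) in eM *.
have hM : 2 * M = n * n.-1 by rewrite two_bin2.
have M0 : 0 < M ^ l by rewrite expn_gt0; apply/orP; left; lia.
rewrite -(leq_pmul2r M0).
have h1 := bin_ratio le eM.
have h2 : (n * (d * n)) ^ l <= (4 * d * M) ^ l.
  rewrite leq_exp2r; last by lia.
  have : n * n <= 4 * M by lia.
  nia.
apply: (@leq_trans (n ^ l * ('C(M, d * n) * (d * n) ^ l))).
  by rewrite -mulnA leq_mul2l h1 orbT.
rewrite mulnCA -expnMn -mulnA -expnMn.
by rewrite leq_mul2l h2 orbT.
Qed.

Lemma card_Un n e : #|Un n e| = 'C('C(n, 2), e).
Proof. by rewrite /Un cards_draws card_Kn. Qed.

Lemma count_bad n m d : 2 <= n -> m <= d * n -> d * n <= 'C(n, 2) ->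
  \sum_(S in Un n (d * n)) bad m S <= #|Un n (d * n)| * \sum_(l < m.+1 | 3 <= l) (4 * d) ^ l.
Proof.
move=> n2 me eM.
rewrite /bad exchange_big /= big_distrr /=; apply: leq_sum => l l3.
have le : l <= d * n by apply: leq_trans me; rewrite -ltnS.
apply: (leq_trans (@count_l n (d * n) l l3 le)).
by rewrite card_Un ratio_bound.
Qed.

Lemma pigeon (T : finType) (A : {set T}) (f : T -> nat) B :
  0 < #|A| -> \sum_(x in A) f x <= #|A| * B -> exists2 x, x \in A & f x <= B.
Proof.
move=> A0 hs.
case: (boolP [exists x in A, f x <= B]) => [/exists_inP[x xA fx]|]; first by exists x.
rewrite negb_exists_in => /forall_inP h.
have : \sum_(x in A) B.+1 <= \sum_(x in A) f x.
  by apply: leq_sum => x xA; rewrite ltnNge h.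
rewrite sum_nat_const => h2; have := leq_trans h2 hs.
rewrite leq_mul2l ltnn orbF => /eqP h0; by move: A0; rewrite h0.
Qed.

Lemma build n m e (S : {set {set 'I_n}}) : S \in Un n e ->
  exists G : {set {set 'I_n}}, [/\ is_graph G, e - m * bad m S <= #|G| &
    forall l, 3 <= l -> l <= m -> forall g : {ffun 'I_l -> 'I_n}, injective g -> ~~ (cyc g \subset G)].
Proof.
move=> SU.
set R := \bigcup_(l < m.+1 | 3 <= l) \bigcup_(g in badset S l) cyc g.
exists (S :\: R).
move: SU; rewrite inE => /andP[SK /eqP Se].
split.
- apply/forallP => x; apply/implyP; rewrite inE => /andP[_ xS].
  by have := subsetP SK x xS; rewrite inE.
- have hR : #|R| <= m * bad m S.
    rewrite /bad big_distrr /=; apply: (leq_trans (card_bigcup_seq _ _ _)).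
    apply: leq_sum => l l3.
    apply: (leq_trans (card_bigcup_seq _ _ _)).
    rewrite -sum1_card big_distrr /=; apply: leq_sum => g _.
    by rewrite muln1 (leq_trans (leq_imset_card _ _)) // card_ord -ltnS.
  have hSR : #|S :&: R| <= #|R| by apply: subset_leq_card; apply: subsetIr.
  rewrite cardsD Se; lia.
- move=> l l3 lm g ig; apply/negP => sub.
  have lm' : l < m.+1 by rewrite ltnS.
  pose l' := Ordinal lm'.
  have gb : g \in badset S l'.
    rewrite inE; apply/andP; split; first exact/injectiveP.
    by apply: subset_trans sub _; apply: subsetDl.
  have cR : cyc g \subset R.
    apply/subsetP => y yc; apply/bigcupP; exists l' => //.
    by apply/bigcupP; exists g.
  have /set0Pn[x xc] := cyc_nonempty g (ltnW (ltnW l3)).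
  have := subsetP sub x xc; rewrite inE (subsetP cR x xc).
  by [].
Qed.



Lemma superlin m (F : {set {set 'I_m}}) : ~ is_forest F ->
  forall D, exists N, forall n, N <= n -> D * n <= ex n F.
Proof.
move=> hF D.
set d := D.+1.
set B := \sum_(l < m.+1 | 3 <= l) (4 * d) ^ l.
exists ((2 * d).+1 + m + m * B) => n hn.
apply/idPn => hneg; apply: hF => hc; move/negP: hneg; apply.
have n2 : 2 <= n by lia.
have hM := two_bin2 n.
have eM : d * n <= 'C(n, 2).
  have : 2 * d <= n.-1 by lia.
  nia.
have me : m <= d * n by nia.
have U0 : 0 < #|Un n (d * n)| by rewrite card_Un bin_gt0.
have [S SU hS] := pigeon U0 (count_bad n2 me eM).
have [G [gG cG nG]] := build m SU.
have fG : Ffree F G by apply: nocyc_Ffree hc nG.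
have : #|G| <= ex n F.
  by rewrite /ex; apply: leq_bigmax_cond; rewrite gG fG.
have : m * bad m S <= m * B by rewrite leq_mul2l hS orbT.
lia.
Qed.

Unset Implicit Arguments.




Import Order.TTheory GRing.Theory Num.Theory.
Local Open Scope ring_scope.

Theorem mainTheorem17 (m : nat) (F : {set {set 'I_m}}) (k : nat) :
  is_graph F -> ~ is_forest F -> (0 < k)%N ->
  forall eps : rat, 0 < eps ->
  exists N : nat, forall n : nat, (N <= n)%N ->
    `| (ex_matching n k F)%:R * (k`!)%:R / ((ex n F)%:R ^+ k) - 1 | <= eps.
Proof.
move=> _ hF; case: k => [//|j] _ eps eps0.
set c := (3 * j.+1 * j.+1)%N.
set D := Num.bound (c%:R / eps).
have hD : c%:R / eps < D%:R by apply: archi_boundP; rewrite divr_ge0 // ltW.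
have hD' : c%:R < eps * D%:R by rewrite mulrC -ltr_pdivrMr.
have [N0 HN] := superlin hF D.
exists (maxn N0 1) => n; rewrite geq_max => /andP[nN n1].
have hE := HN n nN.
have D0 : (0 < D)%N by [].
have E0 : (0 < ex n F)%N by apply: leq_trans hE; rewrite muln_gt0 D0.
have [hx hP] := nat_bounds _ _ F j n1 E0.
set E := ex n F in hE E0 hx hP *.
set X := ex_matching n j.+1 F in hx hP *.
set Pr : rat := E%:R ^+ j.+1.
have Pr0 : 0 < Pr by rewrite exprn_gt0 // ltr0n.
have hx' : X%:R * j.+1`!%:R <= Pr.
  by rewrite /Pr -natrM -natrX ler_nat mulnC.
have hcn : c%:R * n%:R <= eps * E%:R :> rat.
  have : (D * n)%:R <= E%:R :> rat by rewrite ler_nat.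
  rewrite natrM => h.
  have n0 : 0 <= n%:R :> rat by [].
  nra.
have hP' : Pr <= X%:R * j.+1`!%:R + eps * Pr.
  have : (E ^ j.+1)%:R <= (j.+1`! * X + c * n * E ^ j)%:R :> rat by rewrite ler_nat.
  rewrite natrD [(c * n * _)%:R]natrM [(c * n)%:R]natrM natrX [(_`! * X)%:R]natrM => h.
  have p0 : 0 <= E%:R ^+ j :> rat by rewrite exprn_ge0.
  have h2 := ler_wpM2r p0 hcn.
  have -> : Pr = E%:R * E%:R ^+ j by rewrite /Pr exprS.
  rewrite /Pr exprS in h.
  rewrite natrX in h. lra.
have e1 : X%:R * j.+1`!%:R / Pr <= 1 by rewrite ler_pdivrMr // mul1r.
have e2 : 1 - eps <= X%:R * j.+1`!%:R / Pr.
  by rewrite ler_pdivlMr // mulrBl mul1r; lra.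
rewrite ler_norml; apply/andP; split; lra.
Qed.
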